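(* Let $Q=(q_0,\ldots,q_n)$ be a weights vector and let $\mathbf{v}_0,\ldots,\mathbf{v}_n\in\mathbb{Q}^n$ be vectors generating $\mathbb{Q}^n$ (as a $\mathbb{Q}$-vector space) such that $\sum_{j=0}^n q_j\mathbf{v}_j=0$. Let $L$ be the lattice generated by $\mathbf{v}_0,\ldots,\mathbf{v}_n$ and $L'$ the sublattice generated by $q_0\mathbf{v}_0,\ldots,q_n\mathbf{v}_n$. Then: (a) $[L:L']=\prod_{j=0}^n q_j$; (b) if $\mathbf{e}_1,\ldots,\mathbf{e}_n$ is a basis of $L$, $V=(v_{ij})$ is the $n\times(n+1)$ matrix with $\mathbf{v}_j=\sum_{i=1}^n v_{ij}\mathbf{e}_i$, and $V_j$ denotes the determinant of the matrix obtained from $V$ by deleting its $j$-th column ($0\leq j\leq n$), then there is a fixed $\epsilon\in\{0,1\}$ with $V_j=(-1)^{\epsilon+j}q_j$ for all $j$; (c) for every $j$, $\mathbf{v}_j=d_j\mathbf{n}_j$, where $\mathbf{n}_j$ is the generator of the semigroup $\mathbb{R}_{\geq0}\mathbf{v}_j\cap L$ and $d_j=\gcd(q_0,\ldots,q_{j-1},q_{j+1},\ldots,q_n)$; in particular $L$ is generated by $\mathbf{n}_0,\ldots,\mathbf{n}_n$; moreover $\mathbf{n}_0,\ldots,\mathbf{n}_n$ generate $\mathbb{Q}^n$ and $\sum_{j=0}^n q'_j\mathbf{n}_j=0$, where $Q'=(q'_0,\ldots,q'_n)$ is the reduction of $Q$.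
   Context: A weights vector is an $(n+1)$-tuple $Q=(q_0,\ldots,q_n)$ of positive integers with $\gcd(q_0,\ldots,q_n)=1$. Set $d_j=\gcd(q_0,\ldots,q_{j-1},q_{j+1},\ldots,q_n)$ and $a_j=\mathrm{lcm}(d_0,\ldots,d_{j-1},d_{j+1},\ldots,d_n)$. Then $a_j\mid q_j$, and the reduction of $Q$ is $Q'=(q'_0,\ldots,q'_n)$ with $q'_j=q_j/a_j$. *)

(* Defs.v *)
From HB Require Import structures.
From mathcomp Require Import all_boot all_order all_algebra.
Set Implicit Arguments. Unset Strict Implicit. Unset Printing Implicit Defensive.
Import Order.TTheory GRing.Theory Num.Theory.
Local Open Scope ring_scope.

Definition weights_vector (n : nat) (q : 'I_n.+1 -> nat) : Prop :=
  (forall j, (0 < q j)%N) /\ (\big[gcdn/0%N]_(j < n.+1) q j)%N = 1%N.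

Definition dgcd (n : nat) (q : 'I_n.+1 -> nat) (j : 'I_n.+1) : nat :=
  (\big[gcdn/0%N]_(k < n.+1 | k != j) q k)%N.

Definition alcm (n : nat) (q : 'I_n.+1 -> nat) (j : 'I_n.+1) : nat :=
  (\big[lcmn/1%N]_(k < n.+1 | k != j) dgcd q k)%N.

Definition reduction (n : nat) (q : 'I_n.+1 -> nat) (j : 'I_n.+1) : nat :=
  (q j %/ alcm q j)%N.

Definition in_lattice (m n : nat) (w : 'I_m -> 'rV[rat]_n) (x : 'rV[rat]_n)
  : Prop :=
  exists c : 'I_m -> int, x = \sum_(i < m) (c i)%:~R *: w i.

Definition spans_Qn (m n : nat) (w : 'I_m -> 'rV[rat]_n) : Prop :=
  forall x : 'rV[rat]_n, exists c : 'I_m -> rat, x = \sum_(i < m) c i *: w i.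

(* [L : L'] = k : there are exactly k cosets of L' in L, i.e. a list of k
   elements of L, pairwise incongruent mod L', representing every coset. *)
Definition lattice_index (n : nat) (L L' : 'rV[rat]_n -> Prop) (k : nat)
  : Prop :=
  exists s : seq 'rV[rat]_n,
    size s = k /\
    (forall i, (i < size s)%N -> L (nth 0 s i)) /\
    (forall i j, (i < size s)%N -> (j < size s)%N ->
        L' (nth 0 s i - nth 0 s j) -> i = j) /\
    (forall x, L x -> exists2 i, (i < size s)%N & L' (x - nth 0 s i)).

Definition lattice_basis (n : nat) (L : 'rV[rat]_n -> Prop)
  (e : 'I_n -> 'rV[rat]_n) : Prop :=
  (forall x, L x <-> in_lattice e x) /\
  (forall c : 'I_n -> int, \sum_(i < n) (c i)%:~R *: e i = 0 -> forall i, c i = 0).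

(* w is the generator of the semigroup (R_{>=0} v) \cap L.  Since L lies in
   Q^n, a real multiple of v lying in L is a rational multiple (v <> 0) or
   0 (v = 0), so R_{>=0} v \cap L = Q_{>=0} v \cap L. *)
Definition on_ray (n : nat) (v x : 'rV[rat]_n) : Prop :=
  exists2 t : rat, 0 <= t & x = t *: v.

Definition ray_generator (n : nat) (L : 'rV[rat]_n -> Prop)
  (v w : 'rV[rat]_n) : Prop :=
  L w /\ on_ray v w /\
  (forall x, L x -> on_ray v x -> exists k : nat, x = k%:R *: w).

(* Main.v *)
Require Import Defs.
From HB Require Import structures.
From mathcomp Require Import all_boot all_order all_algebra.
From mathcomp Require Import zify ring.
Set Implicit Arguments. Unset Strict Implicit. Unset Printing Implicit Defensive.
Import Order.TTheory GRing.Theory Num.Theory.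
Local Open Scope ring_scope.

Lemma rel_mult (n : nat) (q : 'I_n.+1 -> nat) (v : 'I_n.+1 -> 'rV[rat]_n) :
  (forall j, (0 < q j)%N) -> spans_Qn v ->
  \sum_(j < n.+1) (q j)%:R *: v j = 0 ->
  forall w : 'I_n.+1 -> rat, \sum_j w j *: v j = 0 ->
  exists s : rat, forall j, w j = s * (q j)%:R.
Proof.
move=> qpos sp sq w sw.
pose M : 'M[rat]_(n.+1, n) := \matrix_(j, i) v j 0 i.
have rowM j : row j M = v j by apply/rowP => i; rewrite !mxE.
have mulM (u : 'rV_n.+1) : u *m M = \sum_j u 0 j *: v j.
  by rewrite mulmx_sum_row; apply: eq_bigr => j _; rewrite rowM.
have fullM : (1%:M <= M)%MS.
  apply/row_subP => i; have [c ->] := sp (row i 1%:M).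
  have -> : \sum_j c j *: v j = (\row_j c j) *m M.
    by rewrite mulM; apply: eq_bigr => j _; rewrite mxE.
  exact: submxMl.
have rkM : \rank M = n.
  apply/eqP; rewrite eqn_leq rank_leq_col /=.
  by have := mxrankS fullM; rewrite mxrank1.
pose qr : 'rV[rat]_n.+1 := \row_j (q j)%:R.
have qrk : (qr <= kermx M)%MS.
  by apply/sub_kermxP; rewrite mulM -[X in _ = X]sq; apply: eq_bigr => j _; rewrite mxE.
have qr0 : qr != 0.
  apply/eqP => /rowP /(_ ord0); rewrite !mxE => /eqP.
  by rewrite pnatr_eq0 gtn_eqF ?qpos.
have eqK : (qr == kermx M)%MS.
  rewrite -(mxrank_leqif_eq qrk) mxrank_ker rkM rank_rV qr0.
  by rewrite subSnn.
have : ((\row_j w j) <= qr)%MS.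
  rewrite (eqmxP eqK); apply/sub_kermxP; rewrite mulM -[X in _ = X]sw.
  by apply: eq_bigr => j _; rewrite mxE.
case/sub_rVP => s /rowP hs; exists s => j.
by have := hs j; rewrite !mxE.
Qed.

Lemma int_gcd (m : nat) (P : pred 'I_m) (q : 'I_m -> nat) (s : rat) :
  (forall k, P k -> s * (q k)%:R \is a Num.int) ->
  s * (\big[gcdn/0%N]_(k < m | P k) q k)%:R \is a Num.int.
Proof.
move=> H; apply: (big_ind (fun x : nat => s * x%:R \is a Num.int)) => //.
  by rewrite mulr0.
move=> x y Hx Hy.
have [u [w Huw]] := Bezoutz x y.
have -> : (gcdn x y)%:R = (u * x + w * y)%:~R :> rat by rewrite Huw.
rewrite rmorphD !rmorphM /= mulrDr !mulrA ![s * _%:~R]mulrC -!mulrA.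
by rewrite rpredD // rpredM // ?rpred_int //.
Qed.

Lemma dvd_gcd_big (m : nat) (P : pred 'I_m) (q : 'I_m -> nat) (g : nat) :
  (forall k, P k -> (g %| q k)%N) -> (g %| \big[gcdn/0%N]_(k < m | P k) q k)%N.
Proof.
move=> H; apply: (big_ind (fun x : nat => g %| x)%N) => //.
by move=> x y Hx Hy; rewrite dvdn_gcd Hx.
Qed.

Lemma big_gcd_dvd (m : nat) (P : pred 'I_m) (q : 'I_m -> nat) k :
  P k -> (\big[gcdn/0%N]_(i < m | P i) q i %| q k)%N.
Proof. by move=> Pk; rewrite (bigD1 k) //= dvdn_gcdl. Qed.

Lemma rel_mult_int (n : nat) (q : 'I_n.+1 -> nat) (v : 'I_n.+1 -> 'rV[rat]_n) :
  weights_vector q -> spans_Qn v ->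
  \sum_(j < n.+1) (q j)%:R *: v j = 0 ->
  forall c : 'I_n.+1 -> int, \sum_j (c j)%:~R *: v j = 0 ->
  exists z : int, forall j, c j = z * (q j)%:Z.
Proof.
move=> [qpos g1] sp sq c sc.
have [s hs] := rel_mult qpos sp sq sc.
have : s * (\big[gcdn/0%N]_(k < n.+1 | true) q k)%:R \is a Num.int.
  by apply: int_gcd => k _; rewrite -hs rpred_int.
rewrite g1 mulr1 => /intrP [z hz]; exists z => j.
by apply: (@intr_inj rat); rewrite hs hz rmorphM.
Qed.

Lemma mod_eq (a b q : nat) (d z : int) : (a < q)%N -> (b < q)%N ->
  a%:Z - b%:Z - d * q%:Z = z * q%:Z -> a = b.
Proof. move=> ha hb e.
have e2 : a%:Z - b%:Z = (d + z) * q%:Z by rewrite mulrDl -e; ring.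
have [m|m|m] := ltrgtP (d+z) 0.
- have : (d + z) * q%:Z <= - q%:Z. rewrite -mulN1r ler_pM2r; lia. lia.
- have : (d + z) * q%:Z >= q%:Z. rewrite -[X in X <= _]mul1r ler_pM2r; lia. lia.
- move: e2; rewrite m mul0r; lia.
Qed.

Lemma partA (n : nat) (q : 'I_n.+1 -> nat) (v : 'I_n.+1 -> 'rV[rat]_n) :
  weights_vector q -> spans_Qn v ->
  \sum_(j < n.+1) (q j)%:R *: v j = 0 ->
  lattice_index (in_lattice v) (in_lattice (fun j => (q j)%:R *: v j))
    (\prod_(j < n.+1) q j)%N.
Proof.
move=> wq sp sq.
pose T := {dffun forall j : 'I_n.+1, 'I_(q j)}.
pose f (c : T) : 'rV[rat]_n := \sum_j ((c j : nat)%:Z)%:~R *: v j.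
have inj (c c' : T) : in_lattice (fun j => (q j)%:R *: v j) (f c - f c') -> c = c'.
  case=> d hd.
  have E : \sum_j ((c j : nat)%:Z - (c' j : nat)%:Z - d j * (q j)%:Z)%:~R *: v j = 0.
    transitivity (f c - f c' - \sum_j (d j)%:~R *: ((q j)%:R *: v j));
      last by rewrite hd subrr.
    rewrite /f -!sumrB; apply: eq_bigr => j _.
    by rewrite !rmorphB rmorphM /= !scalerBl scalerA.
  have [z hz] := rel_mult_int wq sp sq E.
  apply/ffunP => j; apply: val_inj; exact: (mod_eq (ltn_ord _) (ltn_ord _) (hz j)).
exists [seq f c | c <- enum T]; split; [|split; [|split]].
- rewrite size_map -cardE card_dep_ffun foldrE big_map big_enum /=.
  by apply: eq_bigr => j _; rewrite card_ord.
- move=> i Hi; have := mem_nth 0 Hi; case/mapP => c _ ->.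
  by exists (fun j => (c j : nat)%:Z).
- move=> i j; rewrite size_map => Hi Hj.
  have x0 : T by case: wq => qp _; exact: finfun (fun j => (Ordinal (qp j) : 'I_(q j))).
  rewrite !(nth_map x0) -?enumT ?Hi ?Hj // => /inj Heq.
  by apply/eqP; rewrite -(nth_uniq x0 Hi Hj (enum_uniq _)) -?enumT Heq.
- move=> x [c ->].
  have qz j : (0 < (q j)%:Z) by case: wq => qp _; rewrite ltz_nat qp.
  have Hr j : (`|(c j %% (q j)%:Z)%Z|%N < q j)%N.
    by rewrite -ltz_nat gez0_abs ?modz_ge0 ?ltz_pmod // gt_eqF.
  pose cc : T := finfun (fun j => (Ordinal (Hr j) : 'I_(q j))).
  have ccin : cc \in enum T by rewrite mem_enum.
  exists (index cc (enum T)); first by rewrite size_map index_mem.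
  rewrite (nth_map cc) ?index_mem // nth_index //.
  exists (fun j => (c j %/ (q j)%:Z)%Z).
  rewrite /f -sumrB; apply: eq_bigr => j _.
  rewrite ffunE /= gez0_abs ?modz_ge0 ?gt_eqF // scalerA -scalerBl; congr (_ *: _).
  rewrite -[(q j)%:R]/(((q j)%:Z)%:~R) -rmorphM -rmorphB /=; congr (_%:~R).
  by rewrite {1}(divz_eq (c j) (q j)) addrK.
Qed.

Lemma z_unit (z b : int) : z * b = 1 -> z = 1 \/ z = -1.
Proof. move=> h.
have : (`|z| * `|b| = 1)%N by rewrite -abszM h.
move/eqP; rewrite muln_eq1 => /andP [/eqP hz _].
case: z hz {h} => [[|[|]]|[|]] //=; by [left|right].
Qed.

Lemma sum_delta (m n : nat) (e : 'I_m -> 'rV[rat]_n) k :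
  \sum_(i < m) (((i == k)%:R : int)%:~R) *: e i = e k.
Proof.
rewrite (bigD1 k) //= eqxx scale1r big1 ?addr0 // => i /negbTE ->.
by rewrite scale0r.
Qed.

Lemma partB (n : nat) (q : 'I_n.+1 -> nat) (v : 'I_n.+1 -> 'rV[rat]_n) :
  weights_vector q -> spans_Qn v ->
  \sum_(j < n.+1) (q j)%:R *: v j = 0 ->
  forall (e : 'I_n -> 'rV[rat]_n) (V : 'M[int]_(n, n.+1)),
     lattice_basis (in_lattice v) e ->
     (forall j, v j = \sum_(i < n) (V i j)%:~R *: e i) ->
     exists eps : bool, forall j : 'I_n.+1,
       \det (col' j V) = (-1) ^+ (eps + j) * (q j)%:Z.
Proof.
move=> wq sp sq e V [bL bI] hv.
have expand (w : 'I_n.+1 -> int) :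
    \sum_j (w j)%:~R *: v j = \sum_i ((\sum_j V i j * w j)%:~R) *: e i.
  under eq_bigr => j _ do rewrite hv scaler_sumr.
  rewrite exchange_big /=; apply: eq_bigr => i _.
  rewrite rmorph_sum /= scaler_suml; apply: eq_bigr => j _.
  by rewrite scalerA rmorphM /= mulrC.
pose cof (j : 'I_n.+1) : int := (-1) ^+ j * \det (col' j V).
pose Ar (r : 'I_n.+1 -> int) : 'M[int]_n.+1 := \matrix_(i, k)
  match unlift ord0 i with Some i' => V i' k | None => r k end.
have F1 r j : cofactor (Ar r) ord0 j = cof j.
  rewrite /cofactor /cof add0n; congr (_ * \det _).
  by apply/matrixP => a b; rewrite !mxE liftK.
have F2 r : \det (Ar r) = \sum_j r j * cof j.
  rewrite (expand_det_row _ ord0); apply: eq_bigr => j _.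
  by rewrite F1 mxE unlift_none.
have F3 i : \sum_j V i j * cof j = 0.
  rewrite -(F2 (fun k => V i k)); apply: (@determinant_alternate _ _ _ ord0 (lift ord0 i)).
    by rewrite neq_lift.
  by move=> k; rewrite !mxE unlift_none liftK.
have rel : \sum_j (cof j)%:~R *: v j = 0.
  rewrite expand big1 // => i _; by rewrite F3 scale0r.
have [z hz] := rel_mult_int wq sp sq rel.
have indep (c : 'I_n -> int) (k : 'I_n) : \sum_i (c i)%:~R *: e i = e k ->
    forall i, c i = (i == k)%:R.
  move=> h; have := bI (fun i => c i - (i == k)%:R).
  have -> : \sum_i ((c i - (i == k)%:R)%:~R) *: e i = 0.
    under eq_bigr => i _ do rewrite rmorphB scalerBl.
    by rewrite sumrB sum_delta h subrr.
  by move=> /(_ erefl) H i; apply/eqP; rewrite -subr_eq0 H.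
have indep0 (c : 'I_n -> int) : \sum_i (c i)%:~R *: e i = 0 -> forall i, c i = 0.
  exact: bI.
have hC0 (k : 'I_n) : exists c : 'I_n.+1 -> int, e k = \sum_j (c j)%:~R *: v j.
  apply/bL.
  by exists (fun i => (i == k)%:R); rewrite sum_delta.
have [C hC] := fin_all_exists hC0.
have VC i k : \sum_j V i j * C k j = (i == k)%:R.
  apply: (indep (fun i => \sum_j V i j * C k j)); by rewrite -(expand (C k)) -hC.
have Vq i : \sum_j V i j * (q j)%:Z = 0.
  apply: (indep0 (fun i => \sum_j V i j * (q j)%:Z)); by rewrite -(expand (fun j => (q j)%:Z)) -[X in _ = X]sq.
pose B : 'M[int]_n.+1 := \matrix_(j, l)
  match unlift ord0 l with Some l' => C l' j | None => (q j)%:Z end.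
pose r0 := fun j : 'I_n.+1 => ((j == ord0)%:R : int).
have detP : \det (Ar r0 *m B) = (q ord0)%:Z.
  rewrite (expand_det_col _ ord0) (bigD1 ord0) //= big1 ?addr0.
    rewrite /cofactor.
    have -> : row' ord0 (col' ord0 (Ar r0 *m B)) = 1%:M.
      apply/matrixP => a b; rewrite !mxE.
      under eq_bigr => j _ do rewrite !mxE !liftK.
      by rewrite VC.
    rewrite det1 mulr1 mxE (bigD1 ord0) //= big1.
      by rewrite !mxE unlift_none /r0 eqxx mul1r addr0.
    by move=> j /negbTE Hj; rewrite !mxE unlift_none /r0 Hj mul0r.
  move=> i Hi; rewrite eq_sym in Hi; have [i' -> _] := unlift_some Hi.
  rewrite mxE; under eq_bigr => j _ do rewrite !mxE liftK unlift_none.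
  by rewrite Vq mul0r.
have zB : z * \det B = 1.
  have q0 : (q ord0)%:Z != 0 by case: wq => qp _; rewrite eqz_nat gtn_eqF ?qp.
  apply: (mulIf q0); rewrite mul1r -{2}detP det_mulmx F2.
  rewrite (bigD1 ord0) //= big1 ?addr0 /r0 ?eqxx ?mul1r.
    by rewrite /cof in hz *; rewrite hz; ring.
  by move=> j /negbTE ->; rewrite mul0r.
have dj j : \det (col' j V) = (-1) ^+ j * (z * (q j)%:Z).
  by rewrite -hz /cof mulrA -expr2 sqrr_sign mul1r.
case: (z_unit zB) => zE; [exists false | exists true] => j;
  rewrite dj zE exprD /= ?mul1r ?expr1 //; ring.
Qed.

Lemma natZ (k : nat) : (k%:R : rat) \is a Num.int.
Proof. by apply/intrP; exists k. Qed.

Lemma sum_delta_r (m n : nat) (e : 'I_m -> 'rV[rat]_n) k (t : rat) :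
  \sum_(i < m) ((i == k)%:R * t) *: e i = t *: e k.
Proof.
rewrite (bigD1 k) //= eqxx mul1r big1 ?addr0 // => i /negbTE ->.
by rewrite mul0r scale0r.
Qed.

Lemma lat_comb (m p n : nat) (v : 'I_m -> 'rV[rat]_n) (w : 'I_p -> 'rV[rat]_n) :
  (forall k, in_lattice v (w k)) ->
  forall c : 'I_p -> int, in_lattice v (\sum_k (c k)%:~R *: w k).
Proof.
move=> H c; have [D hD] := fin_all_exists H.
exists (fun i => \sum_k c k * D k i).
under eq_bigr => k _ do rewrite hD scaler_sumr.
rewrite exchange_big /=; apply: eq_bigr => i _.
rewrite rmorph_sum /= scaler_suml; apply: eq_bigr => k _.
by rewrite scalerA rmorphM.
Qed.

Lemma gcd_all1 (n : nat) (q : 'I_n.+1 -> nat) g :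
  weights_vector q -> (forall k, (g %| q k)%N) -> g = 1%N.
Proof.
move=> [_ g1] H; apply/eqP; rewrite -dvdn1 -g1.
exact: (dvd_gcd_big (P := xpredT)).
Qed.

Lemma partC (n : nat) (q : 'I_n.+1 -> nat) (v : 'I_n.+1 -> 'rV[rat]_n) :
  (0 < n)%N ->
  weights_vector q -> spans_Qn v ->
  \sum_(j < n.+1) (q j)%:R *: v j = 0 ->
  let L := in_lattice v in
  (exists nv : 'I_n.+1 -> 'rV[rat]_n,
     forall j, ray_generator L (v j) (nv j)) /\
  (forall nv : 'I_n.+1 -> 'rV[rat]_n,
     (forall j, ray_generator L (v j) (nv j)) ->
     (forall j, v j = (dgcd q j)%:R *: nv j) /\
     (forall x, L x <-> in_lattice nv x) /\
     spans_Qn nv /\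
     \sum_(j < n.+1) (reduction q j)%:R *: nv j = 0).
Proof.
move=> npos wq sp sq L.
have qpos := wq.1.
pose k0 (j : 'I_n.+1) := lift j (Ordinal npos).
have k0j j : k0 j != j by rewrite eq_sym neq_lift.
have dpos j : (0 < dgcd q j)%N.
  apply: (dvdn_gt0 (qpos (k0 j))); exact: big_gcd_dvd.
have d0 j : (dgcd q j)%:R != 0 :> rat by rewrite pnatr_eq0 gtn_eqF.
have vnz j : v j != 0.
  apply/eqP => vj0.
  have [z hz] := @rel_mult_int n q v wq sp sq (fun k => (k == j)%:R)
    (etrans (@sum_delta _ _ v j) vj0).
  have := hz (k0 j); rewrite (negbTE (k0j j)) => /esym/eqP.
  rewrite mulf_eq0 eqz_nat gtn_eqF ?qpos // orbF => /eqP z0.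
  by have := hz j; rewrite eqxx z0 mul0r.
have dvdq j k : k != j -> (dgcd q j %| q k)%N.
  by move=> kj; apply: big_gcd_dvd.
have Ldiv j : L ((dgcd q j)%:R^-1 *: v j).
  set d := dgcd q j.
  have g1 : gcdn d (q j) = 1%N.
    apply: (gcd_all1 wq) => k; have [->|kj] := eqVneq k j; first exact: dvdn_gcdr.
    exact: dvdn_trans (dvdn_gcdl _ _) (dvdq _ _ kj).
  have [u [w huw]] := Bezoutz d (q j).
  have huw' : u%:~R * d%:R + w%:~R * (q j)%:R = 1 :> rat.
    have : (u * d%:Z + w * (q j)%:Z)%:~R = 1 :> rat by rewrite huw /gcdz /= g1.
    by rewrite rmorphD !rmorphM.
  exists (fun k => if k == j then u else - (w * ((q k %/ d)%N)%:Z)).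
  rewrite (bigD1 j) //= eqxx.
  have rest : \sum_(k < n.+1 | k != j)
      (if k == j then u else - (w * ((q k %/ d)%N)%:Z))%:~R *: v k
      = (w%:~R / d%:R * (q j)%:R) *: v j.
    have sq' : \sum_(k < n.+1 | k != j) (q k)%:R *: v k = - ((q j)%:R *: v j).
      by move: sq; rewrite (bigD1 j) //= addrC => /eqP; rewrite addr_eq0 => /eqP.
    transitivity (- (w%:~R / d%:R) *: \sum_(k < n.+1 | k != j) (q k)%:R *: v k);
      last by rewrite sq' scalerN scaleNr opprK scalerA.
    rewrite scaler_sumr; apply: eq_bigr => k kj.
    rewrite (negbTE kj) scalerA; congr (_ *: _).
    rewrite rmorphN rmorphM /= -[((q k %/ d)%N%:Z)%:~R]/(((q k %/ d)%N)%:R : rat).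
    by rewrite natr_div ?dvdq // ?unitfE //; [ring | exact: d0].
  rewrite rest -scalerDl; congr (_ *: _).
  apply: (mulIf (d0 j)); rewrite mulVf; last exact: d0.
  by rewrite -[LHS]huw' /d; field; exact: d0.
have Lray j (t : rat) : L (t *: v j) -> t * (dgcd q j)%:R \is a Num.int.
  case=> c hc.
  have rel : \sum_k ((c k)%:~R - (k == j)%:R * t) *: v k = 0.
    by rewrite (eq_bigr (fun k => (c k)%:~R *: v k - ((k == j)%:R * t) *: v k))
      ?sumrB ?sum_delta_r -?hc ?subrr // => k _; rewrite scalerBl.
  have [s hs] := rel_mult qpos sp sq rel.
  have sd : s * (dgcd q j)%:R \is a Num.int.
    apply: int_gcd => k kj; have := hs k; rewrite (negbTE kj) mul0r subr0 => <-.
    exact: rpred_int.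
  have tE : t = (c j)%:~R - s * (q j)%:R.
    by have := hs j; rewrite eqxx mul1r => <-; rewrite opprB addrC subrK.
  rewrite tE mulrBl mulrAC; apply: rpredB; apply: rpredM; rewrite ?rpred_int ?natZ //.
have nvE nv : (forall j, ray_generator L (v j) (nv j)) ->
    forall j, nv j = (dgcd q j)%:R^-1 *: v j.
  move=> H j; have [Lw [[t t0 tE] gen]] := H j.
  have /intrP [m hm] : t * (dgcd q j)%:R \is a Num.int by apply: Lray; rewrite -tE.
  have [k hk] : exists k : nat, (dgcd q j)%:R^-1 *: v j = k%:R *: nv j.
    by apply: gen; [exact: Ldiv | exists (dgcd q j)%:R^-1; rewrite ?invr_ge0].
  move: hk; rewrite [nv j]tE scalerA => /eqP; rewrite -subr_eq0 -scalerBl scaler_eq0.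
  rewrite (negbTE (vnz j)) orbF subr_eq0 => /eqP hk.
  have km : (k%:Z * m)%:~R = 1 :> rat.
    by rewrite rmorphM /= -hm mulrA -hk mulVf.
  have : (m * k%:Z = 1) by apply: (@intr_inj rat); rewrite mulrC km.
  case/z_unit => mE.
    by congr (_ *: _); apply: (mulIf (d0 j)); rewrite hm mE mulVf.
  exfalso; have : 0 <= t * (dgcd q j)%:R by rewrite mulr_ge0.
  by rewrite hm mE.
split.
  exists (fun j => (dgcd q j)%:R^-1 *: v j) => j; split; first exact: Ldiv.
  split; first by exists (dgcd q j)%:R^-1; rewrite // invr_ge0.
  move=> x Lx [t t0 xE].
  have /intrP [m hm] : t * (dgcd q j)%:R \is a Num.int by apply: Lray; rewrite -xE.
  have m0 : 0 <= m.
    by rewrite -(ler0z rat) -hm mulr_ge0.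
  exists `|m|%N; rewrite xE scalerA; congr (_ *: _).
  rewrite -[(`|m|%N)%:R]/(((`|m|%N)%:Z)%:~R : rat) gez0_abs // -hm.
  by rewrite -mulrA mulfV ?mulr1.
move=> nv H; have nE := nvE nv H.
have dE j : v j = (dgcd q j)%:R *: nv j by rewrite nE scalerA mulfV ?scale1r.
split; first exact: dE.
split.
  move=> x; split.
    case=> c ->; exists (fun k => c k * (dgcd q k)%:Z).
    by apply: eq_bigr => k _; rewrite dE scalerA rmorphM.
  case=> c ->; apply: lat_comb => k; rewrite nE; exact: Ldiv.
split.
  move=> x; have [c ->] := sp x; exists (fun k => c k * (dgcd q k)%:R).
  by apply: eq_bigr => k _; rewrite dE scalerA.
pose Dl := \big[lcmn/1%N]_(k < n.+1) dgcd q k.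
have key j : (reduction q j)%:R *: nv j = (Dl%:R)^-1 *: ((q j)%:R *: v j).
  set a := alcm q j.
  have apos : (0 < a)%N.
    apply: (big_ind (fun x => 0 < x)%N) => // x y hx hy.
    by rewrite lcmn_gt0 hx.
  have aq : (a %| q j)%N.
    apply: (big_ind (fun x => x %| q j)%N) => //.
      by move=> x y hx hy; rewrite dvdn_lcm hx.
    by move=> k kj; apply: big_gcd_dvd; rewrite eq_sym.
  have g1 : gcdn (dgcd q j) a = 1%N.
    apply: (gcd_all1 wq) => k; have [->|kj] := eqVneq k j.
      exact: dvdn_trans (dvdn_gcdr _ _) aq.
    exact: dvdn_trans (dvdn_gcdl _ _) (dvdq _ _ kj).
  have DE : Dl = (dgcd q j * a)%N.
    by rewrite /Dl (bigD1 j) //= /lcmn g1 divn1.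
  have a0 : a%:R != 0 :> rat by rewrite pnatr_eq0 gtn_eqF.
  rewrite nE /reduction -/a natr_div // ?unitfE // scalerA DE natrM !scalerA.
  congr (_ *: _); field; rewrite a0; exact: d0.
rewrite (eq_bigr _ (fun j _ => key j)) -scaler_sumr sq scaler0 //.
Qed.

Theorem mainTheorem3 (n : nat) (q : 'I_n.+1 -> nat)
  (v : 'I_n.+1 -> 'rV[rat]_n) :
  weights_vector q ->
  spans_Qn v ->
  \sum_(j < n.+1) (q j)%:R *: v j = 0 ->
  let L := in_lattice v in
  let L' := in_lattice (fun j => (q j)%:R *: v j) in
  (* (a) *)
  lattice_index L L' (\prod_(j < n.+1) q j)%N /\
  (* (b) *)
  (forall (e : 'I_n -> 'rV[rat]_n) (V : 'M[int]_(n, n.+1)),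
     lattice_basis L e ->
     (forall j, v j = \sum_(i < n) (V i j)%:~R *: e i) ->
     exists eps : bool, forall j : 'I_n.+1,
       \det (col' j V) = (-1) ^+ (eps + j) * (q j)%:Z) /\
  (* (c) *)
  (exists nv : 'I_n.+1 -> 'rV[rat]_n,
     forall j, ray_generator L (v j) (nv j)) /\
  (forall nv : 'I_n.+1 -> 'rV[rat]_n,
     (forall j, ray_generator L (v j) (nv j)) ->
     (forall j, v j = (dgcd q j)%:R *: nv j) /\
     (forall x, L x <-> in_lattice nv x) /\
     spans_Qn nv /\
     \sum_(j < n.+1) (reduction q j)%:R *: nv j = 0).
Proof.
move=> wq sp sq L L'.
split; first exact: partA.
split; first exact: partB.
rewrite /L /L'; clear L L'.
case: n q v wq sp sq => [|n] q v wq sp sq; last exact: (@partC n.+1 q v (ltn0Sn n) wq sp sq).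
have rv0 (x y : 'rV[rat]_0) : x = y by apply/rowP => -[].
split.
  exists (fun _ => 0) => j; split; first by exists (fun _ => 0); apply: rv0.
  split; first by exists 0 => //; apply: rv0.
  by move=> x _ _; exists 0%N; apply: rv0.
move=> nv _; split; first by move=> j; apply: rv0.
split; first by move=> x; split => _; exists (fun _ => 0); apply: rv0.
split; last exact: rv0.
by move=> x; exists (fun _ => 0); apply: rv0.
Qed.
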